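(* Let $A \in \mathbb{R}^{n\times d}$, $b \in \mathbb{R}^n$ with $Ax=b$ consistent. Let $\lbrace W_1,\ldots,W_N\rbrace \subset \mathbb{R}^n$ and let $w$ be a random variable with $\mathbb{P}[w = W_j] > 0$ for $j=1,\ldots,N$ and $\sum_{j=1}^N \mathbb{P}[w = W_j] = 1$. Let $\lbrace w_l : l \geq 0\rbrace$ be sampled from $\lbrace W_1,\ldots,W_N\rbrace$ without replacement, and once the set is exhausted it is repopulated with its original elements and sampling without replacement is repeated. Let $\mathcal{R}(w) = \mathcal{N}(w)^\perp$ where $\mathcal{N}(w) = \mathrm{span}\lbrace z\in\mathbb{R}^d : \mathbb{P}[z'A'w=0]=1\rbrace$, and $T = \min\lbrace k\geq 0 : \mathrm{span}\lbrace A'w_0,\ldots,A'w_k\rbrace \supset \mathcal{R}(w)\rbrace$. For $x_0 \in \mathbb{R}^d$ and $S_0 = I_d$ define for $l \geq 0$ $$x_{l+1} = \begin{cases} x_l + \dfrac{S_l A' w_l w_l'(b - A x_l)}{w_l' A S_l A' w_l} & S_l A'w_l \neq 0,\\ x_l & \text{otherwise,}\end{cases}\qquad S_{l+1} = \begin{cases} S_l - \dfrac{S_l A' w_l w_l' A S_l}{w_l' A S_l A' w_l} & S_l A' w_l \neq 0,\\ S_l & \text{otherwise.}\end{cases}$$ Then $T \leq N-1$. Moreover, $Ax_{T+1} = b$ for every initialization $x_0$ if $\mathrm{span}\lbrace A'W_1,\ldots,A'W_N\rbrace = \mathrm{row}(A)$, and this holds if $\mathrm{span}\lbrace W_1,\ldots,W_N\rbrace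 = \mathbb{R}^n$.
   Context: $\mathrm{row}(A)$ is the row space of $A$; $A'$ is the transpose. *)

(* Defs.v *)
From HB Require Import structures.
From mathcomp Require Import all_boot all_order all_algebra.
From mathcomp Require Import reals.
Set Implicit Arguments. Unset Strict Implicit. Unset Printing Implicit Defensive.
Import Order.TTheory GRing.Theory Num.Theory.
Local Open Scope ring_scope.

Section RK.
Variables (R : realType) (n d N : nat).
Variables (A : 'M[R]_(n, d)) (b : 'cV[R]_n).

(* finite distribution of w: P[w = W j] = p j *)
Definition prob_orth (W : 'I_N -> 'cV[R]_n) (p : 'I_N -> R) (z : 'rV[R]_d) : R :=
  \sum_(j < N | (z *m (A^T *m W j)) == 0) p j.

Definition Nset W p (z : 'rV[R]_d) : Prop := prob_orth W p z = 1.

Definition in_span (S : 'rV[R]_d -> Prop) (v : 'rV[R]_d) : Prop :=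
  exists (k : nat) (c : 'I_k -> R) (u : 'I_k -> 'rV[R]_d),
    (forall i, S (u i)) /\ v = \sum_(i < k) c i *: u i.

Definition Rset W p (v : 'rV[R]_d) : Prop :=
  forall z, in_span (Nset W p) z -> v *m z^T = 0.

Definition span_upto (w : nat -> 'cV[R]_n) (k : nat) : 'M[R]_(k.+1, d) :=
  \matrix_(i < k.+1) ((w i)^T *m A).

Definition covers W p (w : nat -> 'cV[R]_n) (k : nat) : Prop :=
  forall v, Rset W p v -> (v <= span_upto w k)%MS.

Definition rk_step (wl : 'cV[R]_n) (xS : 'cV[R]_d * 'M[R]_d) : 'cV[R]_d * 'M[R]_d :=
  let x := xS.1 in let S := xS.2 in
  let u := S *m A^T *m wl in
  if u == 0 then (x, S) else
  let den := (wl^T *m A *m S *m A^T *m wl) 0 0 in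
  (x + den^-1 *: (S *m A^T *m wl *m (wl^T *m (b - A *m x))),
   S - den^-1 *: (S *m A^T *m wl *m (wl^T *m A *m S))).

Fixpoint rk_iter (w : nat -> 'cV[R]_n) (x0 : 'cV[R]_d) (l : nat) : 'cV[R]_d * 'M[R]_d :=
  match l with
  | 0 => (x0, 1%:M)
  | l'.+1 => rk_step (w l') (rk_iter w x0 l')
  end.

Definition Wmx (W : 'I_N -> 'cV[R]_n) : 'M[R]_(N, n) := \matrix_(j < N) (W j)^T.
Definition AWmx (W : 'I_N -> 'cV[R]_n) : 'M[R]_(N, d) := \matrix_(j < N) ((W j)^T *m A).

End RK.

(* Main.v *)
Require Import Defs.
From HB Require Import structures.
From mathcomp Require Import all_boot all_order all_algebra.
From mathcomp Require Import reals.
Import Order.TTheory GRing.Theory Num.Theory.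
Local Open Scope ring_scope.

Section Step.
Variables (R : realType) (n d : nat) (A : 'M[R]_(n, d)) (b : 'cV[R]_n).
Variables (xs y : 'cV[R]_d) (Hxs : A *m xs = b).

Lemma den_neq0 (S : 'M[R]_d) (a : 'cV[R]_d) : S^T = S -> S *m S = S ->
  S *m a != 0 -> (a^T *m S *m a) 0 0 != 0.
Proof.
move=> Ssym Sid Sa0.
have -> : a^T *m S *m a = (S *m a)^T *m (S *m a).
  by rewrite trmx_mul Ssym -!mulmxA [S *m (S *m a)]mulmxA Sid.
apply/negP => /eqP H; move/negP: Sa0; apply; apply/eqP/matrixP => i j.
rewrite (ord1 j) mxE.
move: H; rewrite mxE => H.
have Hnn : forall k : 'I_d, xpredT k -> 0 <= (S *m a)^T 0 k * (S *m a) k 0.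
  by move=> k _; rewrite !mxE -expr2 sqr_ge0.
have := psumr_eq0P Hnn H (isT : xpredT i).
rewrite !mxE -expr2 => /eqP; rewrite sqrf_eq0 => /eqP; apply.
Qed.

Lemma step_inv (wl : 'cV[R]_n) (x : 'cV[R]_d) (S : 'M[R]_d) :
  S^T = S -> S *m S = S -> x = xs + S *m y ->
  let xS' := rk_step A b wl (x, S) in
  [/\ xS'.2^T = xS'.2, xS'.2 *m xS'.2 = xS'.2, xS'.1 = xs + xS'.2 *m y,
      wl^T *m A *m xS'.2 = 0 &
      (forall r : 'rV_d, r *m S = 0 -> r *m xS'.2 = 0)].
Proof.
move=> Ssym Sid Hx /=.
rewrite /rk_step /=.
set a := A^T *m wl.
have ha : wl^T *m A = a^T by rewrite /a trmx_mul trmxK.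
have e1 : S *m A^T *m wl = S *m a by rewrite /a mulmxA.
have e2 : wl^T *m A *m S *m A^T *m wl = a^T *m S *m a by rewrite ha -mulmxA.
rewrite e1 e2 ha.
case: eqP => [Sa0|/eqP Sa0] /=.
  split=> //.
  have h : (a^T *m S)^T = 0 by rewrite trmx_mul trmxK Ssym Sa0.
  by rewrite -(trmxK (a^T *m S)) h trmx0.
have hd := @den_neq0 S a Ssym Sid Sa0.
set den := (a^T *m S *m a) 0 0 in hd *.
have hden : a^T *m S *m a = den%:M by rewrite {1}[a^T *m S *m a]mx11_scalar.
set c := den^-1.
have hc : c * den = 1 by rewrite mulVf.
set P := S *m a *m (a^T *m S).
have PT : P^T = P.
  by rewrite /P !trmx_mul !trmxK Ssym !mulmxA.
have SP : S *m P = P by rewrite /P !mulmxA Sid.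
have PS : P *m S = P by rewrite /P -!mulmxA Sid.
have hvu : (a^T *m S) *m (S *m a) = den%:M.
  by rewrite mulmxA -(mulmxA a^T S S) Sid hden.
have PP : P *m P = den *: P.
  by rewrite /P mulmxA -(mulmxA (S *m a) (a^T *m S) (S *m a)) hvu mul_mx_scalar -scalemxAl.
have aP : a^T *m P = den *: (a^T *m S).
  by rewrite /P mulmxA (mulmxA a^T S a) hden mul_scalar_mx.
split.
- by rewrite linearB /= linearZ /= PT Ssym.
- rewrite mulmxBl !mulmxBr -!scalemxAr -!scalemxAl Sid SP PS PP !scalerA -mulrA hc mulr1.
  by rewrite subrr subr0.
- have hr : wl^T *m (b - A *m x) = - (a^T *m S *m y).
    by rewrite Hx -Hxs (mulmxDr A) opprD addrA subrr add0r mulmxN !mulmxA ha.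
  rewrite hr Hx mulmxBl -addrA; congr (_ + _).
  by rewrite mulmxN scalerN -scalemxAl /P !mulmxA.
- by rewrite mulmxBr -scalemxAr aP scalerA hc scale1r subrr.
- by move=> r rS; rewrite mulmxBr -scalemxAr /P !mulmxA rS !mul0mx scaler0 subrr.
Qed.
End Step.

From mathcomp Require Import lra.

Section Main.
Variables (R : realType) (n d N : nat) (A : 'M[R]_(n, d)) (b : 'cV[R]_n).

Lemma iter_inv (xs : 'cV[R]_d) (Hxs : A *m xs = b) (w : nat -> 'cV[R]_n) x0 l :
  let xS := rk_iter A b w x0 l in
  [/\ xS.2^T = xS.2, xS.2 *m xS.2 = xS.2, xS.1 = xs + xS.2 *m (x0 - xs) &
      forall i, (i < l)%N -> (w i)^T *m A *m xS.2 = 0].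
Proof.
elim: l => [|l IH] /=.
  by split=> //; [rewrite trmx1 | rewrite mulmx1 | rewrite mul1mx addrC subrK].
move: IH; case: (rk_iter A b w x0 l) => x S /= [Ssym Sid Hx Hi].
have [h1 h2 h3 h4 h5] := @step_inv R n d A b xs (x0 - xs) Hxs (w l) x S Ssym Sid Hx.
split=> // i; rewrite ltnS leq_eqVlt => /orP [/eqP -> // | il].
by apply: h5; apply: Hi.
Qed.

Variables (W : 'I_N -> 'cV[R]_n) (p : 'I_N -> R).
Hypothesis p_pos : forall j, 0 < p j.
Hypothesis p_sum : \sum_(j < N) p j = 1.

Lemma nset_iff (z : 'rV[R]_d) : Nset A W p z <-> forall j, z *m (A^T *m W j) = 0.
Proof.
rewrite /Nset /prob_orth; split.
  move=> H j; apply/eqP; apply/negPn/negP => hj.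
  have h2 : 0 <= \sum_(i < N | (z *m (A^T *m W i) != 0) && (i != j)) p i.
    by apply: sumr_ge0 => i _; apply: ltW.
  have h3 := p_pos j.
  move: p_sum; rewrite (bigID (fun j => z *m (A^T *m W j) == 0)) /= H.
  rewrite (bigD1 j) //= => ?; lra.
move=> H; rewrite -p_sum; apply: eq_bigl => j; by rewrite H eqxx.
Qed.

Lemma AWrow j : row j (AWmx A W) = (W j)^T *m A.
Proof. by rewrite rowK. Qed.

Lemma nset_mx (z : 'rV[R]_d) : (forall j, z *m (A^T *m W j) = 0) <-> AWmx A W *m z^T = 0.
Proof.
split.
  move=> H; apply/row_matrixP => j; rewrite row_mul AWrow row0.
  have h : ((W j)^T *m A *m z^T)^T = 0 by rewrite !trmx_mul !trmxK H.
  by rewrite -(trmxK ((W j)^T *m A *m z^T)) h trmx0.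
move=> H j; move/row_matrixP: H => /(_ j); rewrite row_mul AWrow row0 => H.
have h : (z *m (A^T *m W j))^T = 0 by rewrite !trmx_mul trmxK H.
by rewrite -(trmxK (z *m _)) h trmx0.
Qed.

Lemma rset_sub (v : 'rV[R]_d) : Rset A W p v -> (v <= AWmx A W)%MS.
Proof.
move=> Hv; rewrite submxE; apply/eqP/matrixP => i k; rewrite (ord1 i) !mxE.
set K := cokermx (AWmx A W).
have Hz : Nset A W p (col k K)^T.
  apply/nset_iff/nset_mx; rewrite trmxK colE mulmxA mulmx_coker mul0mx //.
have : v *m ((col k K)^T)^T = 0.
  apply: Hv; exists 1%N, (fun _ => 1), (fun _ => (col k K)^T); split=> //.
  by rewrite big_ord1 scale1r.
rewrite trmxK => /matrixP /(_ 0 0); rewrite !mxE => H.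
rewrite -[X in _ = X]H; apply: eq_bigr => j _; rewrite !mxE //.
Qed.

Lemma sub_rset (v : 'rV[R]_d) : (v <= AWmx A W)%MS -> Rset A W p v.
Proof.
move=> /submxP [D ->] z [k [c [u [Hu ->]]]].
rewrite raddf_sum mulmx_sumr big1 // => i _.
rewrite [X in _ *m X = _](_ : _ = c i *: (u i)^T); last by apply/matrixP => ? ?; rewrite !mxE.
rewrite -scalemxAr -mulmxA.
by move/nset_iff/nset_mx: (Hu i) => ->; rewrite mulmx0 scaler0.
Qed.

End Main.
Theorem mainTheorem7 (R : realType) (n d N : nat)
  (A : 'M[R]_(n, d)) (b : 'cV[R]_n)
  (consistent : exists x : 'cV[R]_d, A *m x = b)
  (W : 'I_N -> 'cV[R]_n) (W_inj : injective W)
  (p : 'I_N -> R) (p_pos : forall j, 0 < p j) (p_sum : \sum_(j < N) p j = 1)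
  (idx : nat -> 'I_N)
  (wor : forall m : nat, injective (fun i : 'I_N => idx (m * N + i)%N)) :
  let w := fun l : nat => W (idx l) in
  (exists k, covers A W p w k) /\
  forall T : nat, covers A W p w T -> (forall k, covers A W p w k -> (T <= k)%N) ->
    [/\ (T <= N.-1)%N,
        ((AWmx A W == A)%MS ->
           forall x0 : 'cV[R]_d, A *m (rk_iter A b w x0 T.+1).1 = b)
      & (row_full (Wmx W) -> (AWmx A W == A)%MS)].
Proof.
move=> w.
have N0 : (0 < N)%N.
  case: (posnP N) => // N0; move: p_sum; rewrite big1.
    by move/eqP; rewrite eq_sym oner_eq0.
  by case=> j hj; exfalso; move: hj; rewrite N0.
have inj0 : injective (fun i : 'I_N => idx i).
  by move=> i j /=; have := @wor 0 i j; rewrite /= mul0n !add0n; apply.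
have [g gK Kg] := injF_bij inj0.
have cov : covers A W p w N.-1.
  move=> v /(@rset_sub _ _ _ _ A W p p_pos p_sum) Hv; apply: submx_trans Hv _.
  apply/row_subP => j; rewrite AWrow.
  have hgj : (g j < N.-1.+1)%N by rewrite prednK.
  have -> : (W j)^T *m A = row (Ordinal hgj) (span_upto A w N.-1).
    by rewrite /span_upto rowK /w /= Kg.
  exact: row_sub.
split; first by exists N.-1.
move=> T covT Tmin; split.
- exact: Tmin _ cov.
- move=> hAW x0; case: consistent => xs Hxs.
  have hA : (A <= span_upto A w T)%MS.
    apply/row_subP => i; apply: covT; apply: (@sub_rset _ _ _ _ A W p p_pos p_sum).
    by apply: submx_trans (row_sub i A) _; case/andP: hAW.
  have [h1 h2 h3 h4] := @iter_inv _ _ _ A b xs Hxs w x0 T.+1.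
  have hS : span_upto A w T *m (rk_iter A b w x0 T.+1).2 = 0.
    apply/row_matrixP => i; rewrite row_mul /span_upto rowK row0; apply: h4; exact: ltn_ord i.
  case/submxP: hA => D hD.
  have hAS : A *m (rk_iter A b w x0 T.+1).2 = 0 by rewrite {1}hD -mulmxA hS mulmx0.
  by rewrite h3 mulmxDr Hxs mulmxA hAS mul0mx addr0.
- move=> hf.
  have -> : AWmx A W = Wmx W *m A by apply/row_matrixP => j; rewrite row_mul !rowK.
  by apply/eqmxP; apply: eqmxMfull.
Qed.
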